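(* Let $2\leq k<n$ and let $K\subset\mathbb{C}^n$ be a convex body such that for every complex $k$-dimensional linear subspace $P\subset\mathbb{C}^n$, the orthogonal projection of $K$ onto $P$ is symmetric. Then $K$ is symmetric.
   Context: A convex body is a compact convex subset of $\mathbb{C}^n$ with nonempty interior. $\mathbb{S}^1=\{\xi\in\mathbb{C}:|\xi|=1\}$. A set $A\subset\mathbb{C}^n$ is called symmetric if there is a translated copy $A'=A-x_0$ of $A$ such that $\xi A'=A'$ for every $\xi\in\mathbb{S}^1$. Orthogonal projections are with respect to the standard Hermitian inner product on $\mathbb{C}^n$. *)

(* Defs.v *)
From HB Require Import structures.
From mathcomp Require Import all_boot all_order all_algebra.
From mathcomp Require Import all_classical all_reals topology normedtype.
From mathcomp Require Import complex.
Set Implicit Arguments. Unset Strict Implicit. Unset Printing Implicit Defensive.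
Import Order.TTheory GRing.Theory Num.Theory.
Import numFieldNormedType.Exports.
Import ComplexField.
Local Open Scope ring_scope.
Local Open Scope classical_set_scope.

(* The R-linear identification C^n ~ R^(2n), z |-> (Re z, Im z);
   topological notions on C^n are transported along it. *)
Definition realify (R : realType) (n : nat) (x : 'rV[R[i]]_n) : 'rV[R]_(n + n) :=
  row_mx (map_mx (@complex.Re R) x) (map_mx (@complex.Im R) x).

Definition cconvex (R : realType) (n : nat) (K : set 'rV[R[i]]_n) : Prop :=
  forall x y t, K x -> K y -> 0 <= t <= 1 ->
    K ((t%:C)%C *: x + ((1 - t)%:C)%C *: y).

Definition convex_body (R : realType) (n : nat) (K : set 'rV[R[i]]_n) : Prop :=
  [/\ compact (@realify R n @` K), cconvex K & (interior (@realify R n @` K)) !=set0].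

Definition hdot (R : realType) (n : nat) (x y : 'rV[R[i]]_n) : R[i] :=
  \sum_(j < n) x 0 j * ((y 0 j)^*)%C.

Definition orth_proj (R : realType) (n : nat) (P : {vspace 'rV[R[i]]_n})
    (K : set 'rV[R[i]]_n) : set 'rV[R[i]]_n :=
  [set y | exists2 x, K x & (y \in P) /\ (forall z, z \in P -> hdot (x - y) z = 0)].

Definition csymmetric (R : realType) (n : nat) (A : set 'rV[R[i]]_n) : Prop :=
  exists x0 : 'rV[R[i]]_n,
    let A' := [set a - x0 | a in A] in
    forall xi : R[i], `|xi| = 1 -> [set xi *: a | a in A'] = A'.

(* Main.v *)
Require Import Defs.
From HB Require Import structures.
From mathcomp Require Import all_boot all_order all_algebra.
From mathcomp Require Import all_classical all_reals topology normedtype derive.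
From mathcomp Require Import complex.
From mathcomp Require Import ring lra zify.
Set Implicit Arguments. Unset Strict Implicit. Unset Printing Implicit Defensive.
Import Order.TTheory GRing.Theory Num.Theory.
Import numFieldNormedType.Exports.
Import ComplexField.
Local Open Scope ring_scope.
Local Open Scope classical_set_scope.

Section RealPart.
Variable R : realType.

Definition rdot m (r s : 'rV[R]_m) : R := \sum_(j < m) r 0 j * s 0 j.

Lemma cont_sum (T : topologicalType) m (F : 'I_m -> T -> R) :
  (forall i, continuous (F i)) -> continuous (fun x => \sum_i F i x).
Proof.
elim: m F => [|m IH] F cF.
  have -> : (fun x => \sum_(i < 0) F i x) = fun=> 0.
    by apply: funext => x; rewrite big_ord0.
  exact: cst_continuous.
have -> : (fun x => \sum_(i < m.+1) F i x) =
   (fun x => (fun x => \sum_(i < m) F (widen_ord (leqnSn m) i) x) x + F ord_max x).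
  by apply: funext => x; rewrite big_ord_recr.
move=> x; apply: continuousD; last exact: cF.
exact: (IH (fun i => F (widen_ord (leqnSn m) i))).
Qed.

Lemma rdot_cont m (s : 'rV[R]_m) : continuous (fun r : 'rV[R]_m => rdot r s).
Proof.
move=> r0; apply: (@cont_sum _ m (fun j (r : 'rV[R]_m) => r 0 j * s 0 j)) => j x.
apply: (@continuousM _ _ (fun r : 'rV[R]_m => r 0 j) (fun=> s 0 j)).
  exact: coord_continuous.
exact: cst_continuous.
Qed.

Lemma rquad_cont m (s : 'rV[R]_m) : continuous (fun r : 'rV[R]_m => rdot (r - s) (r - s)).
Proof.
rewrite /rdot.
have -> : (fun r : 'rV[R]_m => \sum_(j < m) (r - s) 0 j * (r - s) 0 j) =
  (fun r => \sum_(j < m) (r 0 j - s 0 j) * (r 0 j - s 0 j)).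
  by apply: funext => r; apply: eq_bigr => j _; rewrite !mxE.
apply: (@cont_sum _ m (fun j (r : 'rV[R]_m) => (r 0 j - s 0 j) * (r 0 j - s 0 j))) => j x.
have h : {for x, continuous ((fun r : 'rV[R]_m => r 0 j) - (fun=> s 0 j))}.
  apply: continuousB; [exact: coord_continuous | exact: cst_continuous].
exact: (@continuousM _ _ _ _ x h h).
Qed.

Lemma rdotDl m (a b c : 'rV[R]_m) : rdot (a + b) c = rdot a c + rdot b c.
Proof. by rewrite /rdot -big_split; apply: eq_bigr => j _; rewrite mxE mulrDl. Qed.
Lemma rdotNl m (a c : 'rV[R]_m) : rdot (- a) c = - rdot a c.
Proof. by rewrite /rdot -sumrN; apply: eq_bigr => j _; rewrite mxE mulNr. Qed.
Lemma rdotBl m (a b c : 'rV[R]_m) : rdot (a - b) c = rdot a c - rdot b c.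
Proof. by rewrite rdotDl rdotNl. Qed.
Lemma rdotZl m t (a c : 'rV[R]_m) : rdot (t *: a) c = t * rdot a c.
Proof. by rewrite /rdot mulr_sumr; apply: eq_bigr => j _; rewrite mxE mulrA. Qed.
Lemma rdotC m (a c : 'rV[R]_m) : rdot a c = rdot c a.
Proof. by apply: eq_bigr => j _; rewrite mulrC. Qed.
Lemma rdot_ge0 m (a : 'rV[R]_m) : 0 <= rdot a a.
Proof. by apply: sumr_ge0 => j _; rewrite -expr2 sqr_ge0. Qed.
Lemma rdot_eq0 m (a : 'rV[R]_m) : rdot a a = 0 -> a = 0.
Proof.
move=> /eqP; rewrite psumr_eq0 => [/allP H|j _]; last by rewrite -expr2 sqr_ge0.
apply/matrixP => i j; rewrite mxE ord1.
have := H j (mem_index_enum _); rewrite -expr2 sqrf_eq0 => /eqP //.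
Qed.

Lemma rdotDr m (a b c : 'rV[R]_m) : rdot c (a + b) = rdot c a + rdot c b.
Proof. by rewrite rdotC rdotDl !(rdotC c). Qed.
Lemma rdotZr m t (a c : 'rV[R]_m) : rdot c (t *: a) = t * rdot c a.
Proof. by rewrite rdotC rdotZl rdotC. Qed.

Lemma small_t (a D : R) : 0 <= D -> (forall t, 0 < t -> t <= 1 -> 0 <= a + t * D) -> 0 <= a.
Proof.
move=> D0 H; rewrite leNgt; apply/negP => a0.
have Da : 0 < D - a by lra.
pose t := - a / (D - a).
have tE : t * (D - a) = - a by rewrite /t mulfVK // gt_eqF.
have t0 : 0 < t by rewrite /t divr_gt0 // oppr_gt0.
have t1 : t <= 1 by rewrite /t ler_pdivrMr // mul1r; lra.
have := H t t0 t1; nra.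
Qed.

Definition rconvex m (K : set 'rV[R]_m) :=
  forall x y t, K x -> K y -> 0 <= t <= 1 -> K (t *: x + (1 - t) *: y).

Lemma separation m (K : set 'rV[R]_m) s : compact K -> rconvex K -> K !=set0 -> ~ K s ->
  exists w, forall r, K r -> rdot r w < rdot s w.
Proof.
move=> cK vK K0 Ks.
have [p pK pmin] := EVT_min_rV K0 cK (continuous_subspaceT (@rquad_cont m s)).
rewrite inE in pK.
exists (s - p) => r rK.
have key : 0 <= rdot (p - s) (r - p).
  have h2 : forall t, 0 < t -> t <= 1 -> 0 <= 2 * rdot (p - s) (r - p) + t * rdot (r - p) (r - p).
    move=> t t0 t1.
    have zK : K (t *: r + (1 - t) *: p) by apply: vK => //; rewrite (ltW t0) t1.
    have := pmin _ (mem_set zK).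
    have -> : t *: r + (1 - t) *: p - s = (p - s) + t *: (r - p).
      by apply/matrixP => i j; rewrite !mxE; ring.
    move: (p - s) (r - p) => A B.
    rewrite !(rdotDl, rdotDr, rdotZl, rdotZr) (rdotC B A).
    nra.
  have := small_t (rdot_ge0 (r - p)) h2; lra.
have wpos : 0 < rdot (s - p) (s - p).
  rewrite lt_def rdot_ge0 andbT; apply/eqP => /rdot_eq0 /eqP.
  by rewrite subr_eq0 => /eqP sp; apply: Ks; rewrite sp.
have E1 : rdot r (s - p) = rdot p (s - p) - rdot (p - s) (r - p).
  have -> : p - s = - (s - p) by rewrite opprB.
  move: (s - p) => w; rewrite rdotNl (rdotC w (r - p)) rdotBl; ring.
have E2 : rdot s (s - p) = rdot p (s - p) + rdot (s - p) (s - p).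
  rewrite rdotBl; ring.
lra.
Qed.

End RealPart.
Section ComplexPart.
Variable R : realType.
Local Notation C := R[i].

Lemma hdotDl n (a b z : 'rV[C]_n) : hdot (a + b) z = hdot a z + hdot b z.
Proof. by rewrite /hdot -big_split; apply: eq_bigr => j _; rewrite mxE mulrDl. Qed.
Lemma hdot0l n (z : 'rV[C]_n) : hdot 0 z = 0.
Proof. by rewrite /hdot big1 // => j _; rewrite mxE mul0r. Qed.
Lemma hdotNl n (a z : 'rV[C]_n) : hdot (- a) z = - hdot a z.
Proof. by rewrite /hdot -sumrN; apply: eq_bigr => j _; rewrite mxE mulNr. Qed.
Lemma hdotBl n (a b z : 'rV[C]_n) : hdot (a - b) z = hdot a z - hdot b z.
Proof. by rewrite hdotDl hdotNl. Qed.
Lemma hdotZl n c (a z : 'rV[C]_n) : hdot (c *: a) z = c * hdot a z.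
Proof. by rewrite /hdot mulr_sumr; apply: eq_bigr => j _; rewrite mxE mulrA. Qed.
Lemma hdotDr n (a b z : 'rV[C]_n) : hdot z (a + b) = hdot z a + hdot z b.
Proof. by rewrite /hdot -big_split; apply: eq_bigr => j _; rewrite mxE rmorphD mulrDr. Qed.
Lemma hdot0r n (z : 'rV[C]_n) : hdot z 0 = 0.
Proof. by rewrite /hdot big1 // => j _; rewrite mxE conjc0 mulr0. Qed.
Lemma hdotZr n c (a z : 'rV[C]_n) : hdot z (c *: a) = (c^*)%C * hdot z a.
Proof.
rewrite /hdot mulr_sumr; apply: eq_bigr => j _; rewrite mxE rmorphM /=.
by rewrite mulrCA.
Qed.
Lemma hdot_suml n I (r : seq I) (F : I -> 'rV[C]_n) z :
  hdot (\sum_(i <- r) F i) z = \sum_(i <- r) hdot (F i) z.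
Proof. exact: (big_morph (fun x => hdot x z) (fun a b => hdotDl a b z) (hdot0l z)). Qed.
Lemma hdot_sumr n I (r : seq I) (F : I -> 'rV[C]_n) z :
  hdot z (\sum_(i <- r) F i) = \sum_(i <- r) hdot z (F i).
Proof. exact: (big_morph (fun x => hdot z x) (fun a b => hdotDr a b z) (hdot0r z)). Qed.

Lemma hdot_eq0 n (w : 'rV[C]_n) : hdot w w = 0 -> w = 0.
Proof.
move=> /eqP; rewrite /hdot psumr_eq0 => [/allP H|j _]; last exact: mulcJ_ge0.
apply/matrixP => i j; rewrite mxE ord1.
have := H j (mem_index_enum _); rewrite mulf_eq0 conjc_eq0 orbb => /eqP //.
Qed.

Lemma proj_exists n (P : {vspace 'rV[C]_n}) x :
  exists2 y, y \in P & forall z, z \in P -> hdot (x - y) z = 0.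
Proof.
set d := \dim P; set b := vbasis P.
pose M : 'M[C]_d := \matrix_(i, j) hdot b`_i b`_j.
have Mrow : forall a : 'rV[C]_d, forall j, (a *m M) 0 j = hdot (\sum_i a 0 i *: b`_i) b`_j.
  move=> a j; rewrite !mxE hdot_suml; apply: eq_bigr => i _.
  by rewrite mxE hdotZl.
have Mu : M \in unitmx.
  rewrite -row_free_unit; apply: inj_row_free => a aM.
  set w := \sum_i a 0 i *: b`_i.
  have hw : forall j : 'I_d, hdot w b`_j = 0.
    by move=> j; rewrite /w; have := Mrow a j; rewrite aM mxE => <-.
  have w0 : w = 0.
    apply: hdot_eq0; rewrite {2}/w hdot_sumr big1 // => i _.
    by rewrite hdotZr hw mulr0.
  have fb : free b by apply: basis_free (vbasisP P).
  apply/matrixP => i j; rewrite ord1 mxE.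
  by move/freeP: fb => /(_ (fun i => a 0 i) w0 j).
pose t : 'rV[C]_d := \row_j hdot x b`_j.
pose a := t *m invmx M.
exists (\sum_i a 0 i *: b`_i).
  apply: memv_suml => i _; apply: memvZ; apply: vbasis_mem.
  by apply: mem_nth; rewrite size_tuple.
have hb : forall j : 'I_d, hdot (x - \sum_i a 0 i *: b`_i) b`_j = 0.
  move=> j; rewrite hdotBl -Mrow /a mulmxKV // mxE subrr //.
move=> z zP; rewrite (coord_vbasis zP) hdot_sumr big1 // => i _.
by rewrite hdotZr hb mulr0.
Qed.

Lemma ext_dim n (U : {vspace 'rV[C]_n}) m : (\dim U <= m <= n)%N ->
  exists P : {vspace 'rV[C]_n}, (U <= P)%VS /\ \dim P = m.
Proof.
move=> /andP[]; move Es: (m - \dim U)%N => s; elim: s U Es => [|s IH] U Es h1 h2.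
  by exists U; split => //; lia.
have /subvPn [w _ wU] : ~~ (fullv <= U)%VS.
  apply/negP => /dimvS; rewrite dimvf dim_matrix => hn; lia.
have dU : \dim (U + <[w]>)%VS = (\dim U).+1.
  have L1 := dimv_leqif_sup (addvSl U <[w]>).
  have L2 := dimv_add_leqif U <[w]>.
  have L3 : (\dim <[w]> <= 1)%N by rewrite dim_vline; case: (w != 0).
  have ne : (\dim U != \dim (U + <[w]>)%VS).
    rewrite (L1.2); apply/negP => /subvP H; apply/negP: wU; rewrite negbK.
    by apply: H; apply: (subvP (addvSr U <[w]>)); apply: memv_line.
  move: L1.1 L2.1 => a b; lia.
have [P [UP dP]] := IH (U + <[w]>)%VS ltac:(lia) ltac:(lia) h2.
by exists P; split => //; apply: subv_trans (addvSl _ _) UP.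
Qed.

Lemma two_in n k (u v : 'rV[C]_n) : (2 <= k)%N -> (k <= n)%N ->
  exists P : {vspace 'rV[C]_n}, [/\ \dim P = k, u \in P & v \in P].
Proof.
move=> hk hkn.
have h : (\dim (<[u]> + <[v]>)%VS <= k <= n)%N.
  rewrite hkn andbT; apply: leq_trans (dimv_add_leqif _ _).1 _.
  rewrite !dim_vline; case: (u != 0); case: (v != 0) => /=; lia.
have [P [sP dP]] := ext_dim h.
move/subvP: sP => sP; exists P; split => //; apply: sP.
  by apply: (subvP (addvSl _ _)); apply: memv_line.
by apply: (subvP (addvSr _ _)); apply: memv_line.
Qed.

Lemma realifyD n (a b : 'rV[C]_n) : realify (a + b) = realify a + realify b.
Proof. by rewrite /realify !map_mxD add_row_mx. Qed.

Lemma realifyZ n t (a : 'rV[C]_n) : realify ((t%:C)%C *: a) = t *: realify a.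
Proof.
rewrite /realify scale_row_mx; congr row_mx; apply/matrixP => i j; rewrite !mxE;
  by case: (a i j) => x y /=; ring.
Qed.

Lemma realify_inj n : injective (@realify R n).
Proof.
move=> a b /eq_row_mx [h1 h2]; apply/matrixP => i j.
move/matrixP: h1 => /(_ i j); move/matrixP: h2 => /(_ i j).
rewrite !mxE; case: (a i j) => x y; case: (b i j) => x' y' /= -> -> //.
Qed.

Lemma realify_onto n (w : 'rV[R]_(n + n)) : exists u : 'rV[C]_n, realify u = w.
Proof.
exists (\row_j (lsubmx w 0 j +i* rsubmx w 0 j)%C).
rewrite /realify -[RHS]hsubmxK; congr row_mx; apply/matrixP => i j;
  by rewrite !mxE ord1.
Qed.

Lemma Re_hdot n (x u : 'rV[C]_n) : complex.Re (hdot x u) = rdot (realify x) (realify u).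
Proof.
rewrite /hdot /rdot big_split_ord raddf_sum /= -big_split /=; apply: eq_bigr => j _.
rewrite /realify !row_mxEl !row_mxEr !mxE.
by case: (x 0 j) => a b; case: (u 0 j) => c d /=; ring.
Qed.

Lemma realify_convex n (K : set 'rV[C]_n) : cconvex K -> rconvex (@realify R n @` K).
Proof.
move=> cK _ _ t [x Kx <-] [y Ky <-] ht.
exists ((t%:C)%C *: x + ((1 - t)%:C)%C *: y); first exact: cK.
by rewrite realifyD !realifyZ.
Qed.

Lemma Re_conjM (t w : C) : complex.Re ((t^*)%C * w) = complex.Re t * complex.Re w + complex.Im t * complex.Im w.
Proof. by case: t => a b; case: w => c d /=; ring. Qed.

Lemma cx_key (a b z : C) : a != b ->
  complex.Re (((2%:R * (b - a))^*)%C * z) <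
  complex.Re (((2%:R * (b - a))^*)%C * (b + (-1) * ((a + (-1) * (z - a)) - b))).
Proof.
rewrite !Re_conjM; case: a => a1 a2; case: b => b1 b2; case: z => z1 z2 /=.
rewrite eq_complex /= negb_and => h.
have h' : 0 < (b1 - a1) ^+ 2 + (b2 - a2) ^+ 2.
  case/orP: h => h.
    have : 0 < (b1 - a1) ^+ 2 by rewrite lt_def sqr_ge0 andbT sqrf_eq0 subr_eq0 eq_sym.
    have := sqr_ge0 (b2 - a2); lra.
  have : 0 < (b2 - a2) ^+ 2 by rewrite lt_def sqr_ge0 andbT sqrf_eq0 subr_eq0 eq_sym.
  have := sqr_ge0 (b1 - a1); lra.
nra.
Qed.

Definition hsym (A : set C) (a : C) :=
  forall z xi, `|xi| = 1 -> A z -> A (a + xi * (z - a)).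
Definition Iu n (K : set 'rV[C]_n) (u : 'rV[C]_n) := [set hdot x u | x in K].

Lemma max_lin n (K : set 'rV[C]_n) u : compact (@realify R n @` K) -> K !=set0 ->
  exists2 x0, K x0 & forall x, K x -> complex.Re (hdot x u) <= complex.Re (hdot x0 u).
Proof.
move=> cK [x Kx].
have ne : (@realify R n @` K) !=set0 by exists (realify x); exists x.
have [r rK rmax] := EVT_max_rV ne cK (continuous_subspaceT (@rdot_cont R _ (realify u))).
rewrite inE in rK; case: rK => x0 Kx0 ex0.
exists x0 => // y Ky; rewrite !Re_hdot ex0; apply: rmax; rewrite inE; by exists y.
Qed.

Lemma center_unique n (K : set 'rV[C]_n) u a b : compact (@realify R n @` K) -> K !=set0 ->
  hsym (Iu K u) a -> hsym (Iu K u) b -> a = b.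
Proof.
move=> cK K0 ha hb; apply/eqP; apply/negP => /negP ab.
have [x0 Kx0 xmax] := max_lin ((2%:R * (b - a)) *: u) cK K0.
have n1 : `|-1 : C| = 1 by rewrite normrN1.
have h1 : Iu K u (hdot x0 u) by exists x0.
have [x1 Kx1 ex1] := hb _ _ n1 (ha _ _ n1 h1).
have := cx_key (hdot x0 u) ab; rewrite -ex1 -!hdotZr.
have := xmax _ Kx1; lra.
Qed.

Lemma sym_proj n (P : {vspace 'rV[C]_n}) (K : set 'rV[C]_n) c u : u \in P ->
  (forall xi : C, `|xi| = 1 ->
     [set xi *: a | a in [set a - c | a in orth_proj P K]] = [set a - c | a in orth_proj P K]) ->
  hsym (Iu K u) (hdot c u).
Proof.
move=> uP Hc z xi hxi [x Kx <-].
have [y yP yperp] := proj_exists P x.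
have yK : orth_proj P K y by exists x.
have : [set xi *: a | a in [set a - c | a in orth_proj P K]] (xi *: (y - c)).
  by exists (y - c) => //; exists y.
rewrite (Hc xi hxi) => -[y' [x' Kx' [y'P y'perp]] ey'].
exists x' => //.
have e1 : hdot x' u = hdot y' u by apply/eqP; rewrite -subr_eq0 -hdotBl y'perp.
have e2 : hdot x u = hdot y u by apply/eqP; rewrite -subr_eq0 -hdotBl yperp.
rewrite e1 e2.
have -> : y' = c + xi *: (y - c) by rewrite -ey' addrC subrK.
by rewrite hdotDl hdotZl hdotBl.
Qed.
End ComplexPart.

Unset Implicit Arguments.
Theorem theorem2p6 (R : realType) (n k : nat) (hk2 : (2 <= k)%N) (hkn : (k < n)%N)
  (K : set 'rV[R[i]]_n) (hK : convex_body K)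
  (hproj : forall P : {vspace 'rV[R[i]]_n}, \dim P = k -> csymmetric (orth_proj P K)) :
  csymmetric K.
Proof.
case: hK => cK vK _.
case: (pselect (K !=set0)) => [K0|nK0]; last first.
  exists 0; move=> A' xi _; rewrite /A'; apply/seteqP; split => [? [? [x Kx ?] ?]|? [x Kx ?]];
    by exfalso; apply: nK0; exists x.
have hkn' : (k <= n)%N by apply: ltnW.
have cen : forall P : {vspace 'rV[R[i]]_n}, \dim P = k -> exists c : 'rV[R[i]]_n,
    forall u, u \in P -> hsym (Iu K u) (hdot c u).
  move=> P dP; have [c /= Hc] := hproj P dP.
  by exists c => u uP; apply: sym_proj uP Hc.
have hc : forall u, exists a, hsym (Iu K u) a.
  move=> u; have [P [dP uP _]] := two_in u u hk2 hkn'.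
  have [c Hc] := cen P dP; exists (hdot c u); exact: Hc.
pose phi u := proj1_sig (cid (hc u)).
have hphi : forall u, hsym (Iu K u) (phi u) by move=> u; exact: (proj2_sig (cid (hc u))).
have lin : forall u v l, phi (u + l *: v) = phi u + ((l^*)%C) * phi v.
  move=> u v l; have [P [dP uP vP]] := two_in u v hk2 hkn'.
  have [c Hc] := cen P dP.
  have E : forall w, w \in P -> phi w = hdot c w.
    by move=> w wP; apply: (center_unique cK K0 (hphi w) (Hc w wP)).
  rewrite !E ?hdotDr ?hdotZr //; apply: memvD uP (memvZ _ vP).
have phiD : forall u v, phi (u + v) = phi u + phi v.
  by move=> u v; rewrite -[v]scale1r lin conjc1 mul1r scale1r.
have phi0 : phi 0 = 0.
  have h := phiD 0 0; rewrite addr0 in h.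
  by apply: (addrI (phi 0)); rewrite addr0 -h.
have phiZ : forall l v, phi (l *: v) = ((l^*)%C) * phi v.
  by move=> l v; have := lin 0 v l; rewrite add0r phi0 add0r.
have phi_sum : forall (F : 'I_n -> 'rV[R[i]]_n), phi (\sum_j F j) = \sum_j phi (F j).
  by move=> F; apply: (big_morph phi phiD phi0).
pose c0 : 'rV[R[i]]_n := \row_j phi (delta_mx 0 j).
have phiE : forall u, phi u = hdot c0 u.
  move=> u; rewrite {1}(row_sum_delta u) phi_sum /hdot; apply: eq_bigr => j _.
  by rewrite phiZ mxE mulrC.
have core : forall x xi, K x -> `|xi| = 1 -> K (c0 + xi *: (x - c0)).
  move=> x xi Kx hxi; apply: contrapT => Ky.
  have nK : ~ (@realify R n @` K) (realify (c0 + xi *: (x - c0))).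
    by case=> y Ky' /realify_inj ey; apply: Ky; rewrite -ey.
  have ne : (@realify R n @` K) !=set0 by case: K0 => y Ky0; exists (realify y); exists y.
  have [w Hw] := separation cK (realify_convex vK) ne nK.
  have [u eu] := realify_onto w.
  have [x' Kx' ex'] := hphi u (hdot x u) xi hxi ltac:(by exists x).
  have := Hw _ (ex_intro2 _ _ x' Kx' erefl).
  rewrite -eu -!Re_hdot ex' !phiE hdotDl hdotZl hdotBl; lra.
exists c0; move=> A' xi hxi; rewrite /A'.
have xi0 : xi != 0 by apply/negP => /eqP x0; move: hxi; rewrite x0 normr0 => /eqP; rewrite eq_sym oner_eq0.
apply/seteqP; split => [? [? [x Kx <-] <-]|? [x Kx <-]].
  exists (c0 + xi *: (x - c0)); first exact: core.
  by rewrite addrC addKr.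
exists (xi^-1 *: (x - c0)).
  exists (c0 + xi^-1 *: (x - c0)); last by rewrite addrC addKr.
  by apply: core => //; rewrite normrV ?unitfE // hxi invr1.
by rewrite scalerA mulfV // scale1r.
Qed.
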